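(* Let $M=(E,\mathcal{I})$ be a matroid, $m,\Delta$ positive integers, $W:E\to\{-\Delta,\dots,\Delta\}^m$ weight vectors and $\mu\ge0$. Let $A,B\in\mathcal{I}$ be disjoint with $|A|=|B|=k$ and $\|W(A)-W(B)\|_1\le\mu$, and let $d\in\mathbb{Z}^m$. Then there exist unicolor sets $A'\subseteq A$, $B'\subseteq B$ of equal cardinality such that (i) $(A\setminus A')\cup B'\in\mathcal{I}$, (ii) $|A'|=|B'|\ge\dfrac{k-\|d\|_1\mu}{(2\|d\|_1\Delta+1)^2(2\Delta+1)^{2m}}$, and (iii) $d^{\mathsf T}W(a)\ge d^{\mathsf T}W(b)$ for each $a\in A'$ and $b\in B'$.
   Context: $W(S)=\sum_{e\in S}W(e)$. A set $S\subseteq E$ is unicolor if $W(a)=W(b)$ for all $a,b\in S$. *)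

(* Defs.v *)
From HB Require Import structures.
From mathcomp Require Import all_boot all_order all_algebra.
Set Implicit Arguments. Unset Strict Implicit. Unset Printing Implicit Defensive.
Import Order.TTheory GRing.Theory Num.Theory.
Local Open Scope ring_scope.

Definition is_matroid (E : finType) (indep : pred {set E}) : Prop :=
  [/\ indep set0,
      (forall A B : {set E}, indep B -> A \subset B -> indep A) &
      (forall A B : {set E}, indep A -> indep B -> (#|A| < #|B|)%N ->
          exists2 x, x \in B :\: A & indep (x |: A))].

Definition wsum (E : finType) (m : nat) (W : E -> 'rV[int]_m) (S : {set E})
  : 'rV[int]_m := \sum_(e in S) W e.

Definition norm1 (m : nat) (v : 'rV[int]_m) : int := \sum_(i < m) `|v 0 i|.

Definition dotv (m : nat) (d x : 'rV[int]_m) : int := \sum_(i < m) d 0 i * x 0 i.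

Definition unicolor (E : finType) (m : nat) (W : E -> 'rV[int]_m) (S : {set E})
  : Prop := forall a b, a \in S -> b \in S -> W a = W b.

(* Main.v *)
Require Import Defs.
From HB Require Import structures.
From mathcomp Require Import all_boot all_order all_algebra.
From mathcomp Require Import zify ring lra.
Import Order.TTheory GRing.Theory Num.Theory.

Module Aux.
Set Implicit Arguments. Unset Strict Implicit.

Section Mat.
Variables (E : finType) (indep : pred {set E}).
Hypothesis hM : is_matroid indep.

Definition rk (X : {set E}) : nat := \max_(I : {set E} | (I \subset X) && indep I) #|I|.

Lemma rk_ge (I X : {set E}) : indep I -> I \subset X -> #|I| <= rk X.
Proof. move=> iI sIX; rewrite /rk; apply: (@leq_bigmax_cond _ _ (fun J : {set E} => #|J|) I); by rewrite sIX iI. Qed.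

Lemma rk_wit (X : {set E}) : exists I : {set E}, [/\ I \subset X, indep I & #|I| = rk X].
Proof.
have P0 : (set0 \subset X) && indep set0 by rewrite sub0set; case: hM.
case: (@arg_maxnP _ set0 (fun J : {set E} => (J \subset X) && indep J) (fun J : {set E} => #|J|) P0) => I /andP[sIX iI] Hmax.
exists I; split => //; apply/eqP; rewrite eqn_leq rk_ge //=.
by apply/bigmax_leqP => J /Hmax.
Qed.

Lemma indep_sub (A B : {set E}) : indep B -> A \subset B -> indep A.
Proof. by case: hM => _ H _; apply: H. Qed.

Lemma rk_ext (Y Z : {set E}) : indep Y -> Y \subset Z ->
  exists Y' : {set E}, [/\ Y \subset Y', Y' \subset Z, indep Y' & #|Y'| = rk Z].
Proof.
have [I0 [sI0 iI0 cI0]] := rk_wit Z.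
move: {2}(rk Z - #|Y|) (erefl (rk Z - #|Y|)) => n.
elim: n Y => [|n IH] Y eqn iY sYZ.
  exists Y; split => //; have := rk_ge iY sYZ; lia.
have ltY : #|Y| < #|I0| by lia.
case: hM => _ _ /(_ Y I0 iY iI0 ltY) [x /setDP[xI xY] ixY].
have cx : #|x |: Y| = #|Y|.+1 by rewrite cardsU1 xY.
have [|||Y' [s1 s2 s3 s4]] := IH (x |: Y); first by lia.
- done.
- by rewrite subUset sub1set (subsetP sI0) //.
exists Y'; split => //; apply: subset_trans s1; exact: subsetUr.
Qed.

Lemma rk_mono (X Y : {set E}) : X \subset Y -> rk X <= rk Y.
Proof.
move=> sXY; have [I [sI iI <-]] := rk_wit X; apply: rk_ge iI _; exact: subset_trans sXY.
Qed.

Lemma rk_submod (X Y : {set E}) : rk (X :|: Y) + rk (X :&: Y) <= rk X + rk Y.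
Proof.
have [I [sI iI cI]] := rk_wit (X :&: Y).
have sIU : I \subset X :|: Y by apply: subset_trans (subsetUl X Y); apply: subset_trans sI (subsetIl X Y).
have [J [sIJ sJ iJ cJ]] := rk_ext iI sIU.
have h1 : #|J :&: X| <= rk X by apply: rk_ge; [exact: indep_sub iJ (subsetIl _ _)| exact: subsetIr].
have h2 : #|J :&: Y| <= rk Y by apply: rk_ge; [exact: indep_sub iJ (subsetIl _ _)| exact: subsetIr].
have e1 : (J :&: X) :|: (J :&: Y) = J by rewrite -setIUr; apply/setIidPl.
have e2 : #|I| <= #|(J :&: X) :&: (J :&: Y)|.
  apply: subset_leq_card; rewrite subsetI !subsetI sIJ.
  by have := sI; rewrite subsetI => /andP[-> ->].
have := cardsUI (J :&: X) (J :&: Y); rewrite e1; lia.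
Qed.

End Mat.
Section Rho.
Variables (E : finType) (indep : pred {set E}) (A : {set E}) (k : nat).
Hypothesis hM : is_matroid indep.
Hypothesis hk : forall I, indep I -> #|I| <= k.
Hypothesis iA : indep A.
Hypothesis cA : #|A| = k.

Notation rk := (rk indep).
Implicit Types (X C I : {set E}).

Lemma rk_le X : rk X <= k.
Proof. by have [I [_ iI <-]] := rk_wit hM X; apply: hk. Qed.

Lemma rkA X : A \subset X -> rk X = k.
Proof. by move=> sAX; apply/eqP; rewrite eqn_leq rk_le -{1}cA rk_ge. Qed.

Definition rho (C X : {set E}) := rk ((A :\: C) :|: X) - #|A :\: C|.

Lemma rkP C X : #|A :\: C| <= rk ((A :\: C) :|: X).
Proof. by apply: rk_ge; [apply: (indep_sub hM iA); apply: subsetDl | apply: subsetUl]. Qed.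

Lemma rho_UX C X1 X2 : rho C (X1 :|: X2) <= rho C X1 + rho C X2.
Proof.
rewrite /rho; set P := A :\: C.
have h := rk_submod hM (P :|: X1) (P :|: X2).
have e : (P :|: X1) :|: (P :|: X2) = P :|: (X1 :|: X2) by rewrite setUACA setUid.
rewrite e in h.
have h2 : #|P| <= rk ((P :|: X1) :&: (P :|: X2)).
  by apply: rk_ge; [apply: (indep_sub hM iA); apply: subsetDl | rewrite subsetI !subsetUl].
have h3 := rkP C X1; have h4 := rkP C X2; have h5 := rkP C (X1 :|: X2).
rewrite -/P in h3 h4 h5; lia.
Qed.

Lemma rho_UC C1 C2 X : rho (C1 :|: C2) X <= rho C1 X + rho C2 X.
Proof.
rewrite /rho.
have h := rk_submod hM ((A :\: C1) :|: X) ((A :\: C2) :|: X).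
have e1 : ((A :\: C1) :|: X) :&: ((A :\: C2) :|: X) = (A :\: (C1 :|: C2)) :|: X.
  by apply/setP => x; rewrite !inE; case: (x \in X); case: (x \in A); case: (x \in C1); case: (x \in C2).
have e2 : ((A :\: C1) :|: X) :|: ((A :\: C2) :|: X) = (A :\: (C1 :&: C2)) :|: X.
  by apply/setP => x; rewrite !inE; case: (x \in X); case: (x \in A); case: (x \in C1); case: (x \in C2).
rewrite e1 e2 in h.
have h3 := rkP C1 X; have h4 := rkP C2 X; have h5 := rkP (C1 :|: C2) X; have h6 := rkP (C1 :&: C2) X.
have ec : #|A :\: C1| + #|A :\: C2| = #|A :\: (C1 :&: C2)| + #|A :\: (C1 :|: C2)|.
  have e3 : (A :\: C1) :|: (A :\: C2) = A :\: (C1 :&: C2).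
    by apply/setP => x; rewrite !inE; case: (x \in A); case: (x \in C1); case: (x \in C2).
  have e4 : (A :\: C1) :&: (A :\: C2) = A :\: (C1 :|: C2).
    by apply/setP => x; rewrite !inE; case: (x \in A); case: (x \in C1); case: (x \in C2).
  by rewrite -cardsUI e3 e4.
lia.
Qed.

Lemma rho0C X : rho set0 X = 0.
Proof. by rewrite /rho setD0 rkA ?subsetUl // cA subnn. Qed.

Lemma rhoC0 C : rho C set0 = 0.
Proof.
rewrite /rho setU0; apply/eqP; rewrite subn_eq0.
have [I [sI _ <-]] := rk_wit hM (A :\: C); exact: subset_leq_card.
Qed.

Lemma rho_bigX (I : finType) C (D : I -> {set E}) :
  rho C (\bigcup_i D i) <= \sum_i rho C (D i).
Proof.
apply: (big_rec2 (fun U s => rho C U <= s)); first by rewrite rhoC0.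
by move=> i U s _ h; apply: leq_trans (rho_UX _ _ _) _; rewrite leq_add2l.
Qed.

Lemma rho_bigC (I : finType) (C : I -> {set E}) X :
  rho (\bigcup_i C i) X <= \sum_i rho (C i) X.
Proof.
apply: (big_rec2 (fun U s => rho U X <= s)); first by rewrite rho0C.
by move=> i U s _ h; apply: leq_trans (rho_UC _ _ _) _; rewrite leq_add2l.
Qed.

Lemma rho_lb C X : indep X -> #|X| <= rho C X + #|A :\: C|.
Proof.
move=> iX; rewrite /rho subnK ?rkP //; apply: rk_ge => //; exact: subsetUr.
Qed.

Lemma rho_real C X : [disjoint A & X] ->
  exists A' B' : {set E}, [/\ A' \subset A, A' \subset C, B' \subset X & #|A'| = #|B'|]
    /\ rho C X <= #|B'| /\ indep ((A :\: A') :|: B').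
Proof.
move=> dAX; set P := A :\: C.
have iP : indep P by apply: (indep_sub hM iA); apply: subsetDl.
have [Y1 [s1 s2 i1 c1]] := rk_ext hM iP (subsetUl P X).
have [Y2 [s3 s4 i2 c2]] := rk_ext hM i1 (subsetUl Y1 A).
rewrite rkA ?subsetUr // in c2.
exists (A :\: Y2), (Y2 :\: A); split; [split|split].
- exact: subsetDl.
- apply/subsetP => x; rewrite !inE => /andP[xY xA]; apply: contraNT xY => xC.
  apply: (subsetP s3); apply: (subsetP s1); by rewrite !inE xC xA.
- apply/subsetP => x; rewrite !inE => /andP[xA xY].
  have := subsetP s4 x xY; rewrite inE (negPf xA) orbF.
  by move=> /(subsetP s2); rewrite !inE (negPf xA) andbF.
- have := cardsID A Y2; have := cardsID Y2 A; rewrite setIC; lia.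
- have e : Y1 :&: A \subset P.
    apply/subsetP => x; rewrite inE => /andP[xY xA].
    move: (subsetP s2 x xY); rewrite inE => /orP[//|xX].
    by rewrite (disjointFr dAX xA) in xX.
  have h1 := subset_leq_card e.
  have h2 : #|Y1 :\: A| <= #|Y2 :\: A| by apply: subset_leq_card; apply: setSD.
  have := cardsID A Y1; rewrite /rho -/P; lia.
- have -> : (A :\: (A :\: Y2)) :|: (Y2 :\: A) = Y2.
    by apply/setP => x; rewrite !inE; case: (x \in A); case: (x \in Y2).
  done.
Qed.

End Rho.

Local Open Scope ring_scope.

Lemma PoszS (I : Type) (r : seq I) (P : pred I) (F : I -> nat) :
  Posz (\sum_(i <- r | P i) F i)%N = \sum_(i <- r | P i) Posz (F i).
Proof. by elim/big_rec2: _ => // i a b _ <-. Qed.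

Lemma sum_ge_nat (V n : nat) : (\sum_(j < V) (n <= j)%N = V - n)%N.
Proof.
elim: V => [|V IH]; first by rewrite big_ord0.
by rewrite big_ord_recr /= IH; case: (leqP n V) => h /=; lia.
Qed.

Lemma card_cond (T : finType) (S : {set T}) (p : pred T) :
  #|[set x in S | p x]| = (\sum_(x in S) p x)%N.
Proof.
rewrite -sum1_card big_mkcond [RHS]big_mkcond /=.
by apply: eq_bigr => x _; rewrite inE; case: (x \in S); case: (p x).
Qed.

Lemma cnt_le (n0 : nat) (x : int) : `|x| <= n0%:Z ->
  \sum_(j < (2*n0).+1) Posz (x <= j%:Z - n0%:Z)%R = n0%:Z + 1 - x.
Proof.
move=> hx; have hx' : 0 <= x + n0%:Z by move: hx; rewrite ler_norml; lia.
set n := absz (x + n0%:Z).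
have en : n%:Z = x + n0%:Z by rewrite /n gez0_abs.
have e : forall j : 'I_(2*n0).+1, (x <= j%:Z - n0%:Z) = (n <= j)%N.
  move=> j; rewrite -lez_nat en; apply/idP/idP; lia.
under eq_bigr do rewrite e.
rewrite -PoszS sum_ge_nat.
have : (n <= (2 * n0).+1)%N by rewrite -lez_nat en; move: hx; rewrite ler_norml; lia.
move=> hn; lia.
Qed.

Lemma cnt_lt (n0 : nat) (x : int) : `|x| <= n0%:Z ->
  \sum_(j < (2*n0).+1) Posz (x < j%:Z - n0%:Z)%R = n0%:Z - x.
Proof.
move=> hx; have hx' : 0 <= x + n0%:Z by move: hx; rewrite ler_norml; lia.
set n := absz (x + n0%:Z).
have en : n%:Z = x + n0%:Z by rewrite /n gez0_abs.
have e : forall j : 'I_(2*n0).+1, (x < j%:Z - n0%:Z) = (n.+1 <= j)%N.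
  move=> j; rewrite -lez_nat; apply/idP/idP; lia.
under eq_bigr do rewrite e.
rewrite -PoszS sum_ge_nat.
have : (n.+1 <= (2 * n0).+1)%N by rewrite -lez_nat; move: hx; rewrite ler_norml; lia.
move=> hn; lia.
Qed.

Lemma pigeon_int (I : finType) (F : I -> int) : (0 < #|I|)%N ->
  exists i, \sum_i F i <= #|I|%:Z * F i.
Proof.
move=> hI; case: (boolP [exists i, \sum_j F j <= #|I|%:Z * F i]) => [/existsP//|].
rewrite negb_exists => /forallP H.
have : \sum_(i : I) #|I|%:Z * F i < \sum_(i : I) \sum_j F j.
  apply: ltr_sum; last by move=> i _; rewrite ltNge H.
  by move: hI; rewrite has_predT cardT enumT.
by rewrite -mulr_sumr sumr_const -mulr_natl natz ltxx.
Qed.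

Lemma pigeon_nat (I : finType) (F : I -> nat) : (0 < #|I|)%N ->
  exists i, (\sum_i F i <= #|I| * F i)%N.
Proof.
move=> hI; have [i Hi] := pigeon_int F hI; exists i.
by rewrite -lez_nat PoszM PoszS.
Qed.

Lemma norm1_ge0 m (v : 'rV[int]_m) : 0 <= norm1 v.
Proof. by apply: sumr_ge0 => i _; exact: normr_ge0. Qed.

Lemma norm1_coord m (v : 'rV[int]_m) i : `|v 0 i| <= norm1 v.
Proof.
rewrite /norm1 (bigD1 i) //= lerDl; apply: sumr_ge0 => j _; exact: normr_ge0.
Qed.

Lemma dot_boundc m (d x : 'rV[int]_m) c : (forall i, `|x 0 i| <= c) ->
  `|dotv d x| <= norm1 d * c.
Proof.
move=> hx; apply: le_trans (ler_norm_sum _ _ _) _.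
rewrite /norm1 mulr_suml; apply: ler_sum => i _.
by rewrite normrM ler_wpM2l.
Qed.

Lemma dot_bound m (d x : 'rV[int]_m) : `|dotv d x| <= norm1 d * norm1 x.
Proof. by apply: dot_boundc => i; exact: norm1_coord. Qed.

Lemma dotv_sum (E : finType) m (W : E -> 'rV[int]_m) (S : {set E}) d :
  \sum_(e in S) dotv d (W e) = dotv d (wsum W S).
Proof.
rewrite /dotv /wsum exchange_big /=; apply: eq_bigr => i _.
by rewrite summxE mulr_sumr.
Qed.

Lemma dotvB m (d x y : 'rV[int]_m) : dotv d (x - y) = dotv d x - dotv d y.
Proof.
by rewrite /dotv -sumrB; apply: eq_bigr => i _; rewrite !mxE mulrBr.
Qed.

End Aux.
Import Aux.
Local Open Scope ring_scope.

Lemma PoszX (n k : nat) : Posz (n ^ k)%N = (Posz n) ^+ k.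
Proof. by rewrite -[LHS]natz natrX natz. Qed.

Lemma PoszS2 (n : nat) : Posz (2 * n).+1 = 2 * Posz n + 1.
Proof. lia. Qed.

Lemma lin_aux (x y z w k : int) : k + x - y <= w -> - z <= x - y -> k - z <= w.
Proof. lia. Qed.

Lemma nat_aux (V N r : nat) : (0 < V)%N -> (V * (N * (N * r)) <= r * (V * N) ^ 2)%N.
Proof.
move=> hV; have -> : (r * (V * N) ^ 2 = V * (N * (N * r)) * V)%N by ring.
by rewrite leq_pmulr.
Qed.

Lemma trunc_matroid (E : finType) (indep : pred {set E}) (k : nat) :
  is_matroid indep -> is_matroid [pred X : {set E} | indep X && (#|X| <= k)%N].
Proof.
case=> h0 h1 h2; split => /=.
- by rewrite h0 cards0.
- move=> X Y /andP[iY cY] sXY; rewrite (h1 _ _ iY sXY) /=.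
  exact: leq_trans (subset_leq_card sXY) cY.
- move=> X Y /andP[iX cX] /andP[iY cY] lt.
  have [x xYX ix] := h2 X Y iX iY lt; exists x => //; rewrite ix /=.
  move: xYX; rewrite inE => /andP[xX _]; rewrite cardsU1 xX.
  exact: leq_trans lt cY.
Qed.

Theorem lemma12 (E : finType) (indep : pred {set E}) (m Delta : nat)
  (W : E -> 'rV[int]_m) (R : realFieldType) (mu : R)
  (A B : {set E}) (k : nat) (d : 'rV[int]_m) :
  is_matroid indep ->
  (0 < m)%N -> (0 < Delta)%N ->
  (forall e (i : 'I_m), `|W e 0 i| <= Delta%:Z) ->
  0 <= mu ->
  indep A -> indep B -> [disjoint A & B] ->
  #|A| = k -> #|B| = k ->
  (norm1 (wsum W A - wsum W B))%:~R <= mu ->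
  exists A' B' : {set E},
    [/\ A' \subset A, B' \subset B, unicolor W A' & unicolor W B'] /\
    [/\ #|A'| = #|B'|,
        indep ((A :\: A') :|: B'),
        (k%:R - (norm1 d)%:~R * mu)
          / (((2 * norm1 d * Delta%:Z + 1) ^+ 2 * (2 * Delta%:Z + 1) ^+ (2 * m))%:~R)
          <= (#|A'|%:R : R) &
        forall a b, a \in A' -> b \in B' -> dotv d (W a) >= dotv d (W b)].
Proof.
move=> hM hm hD hW hmu iA iB dAB cA cB hnorm.
pose indk := [pred X : {set E} | indep X && (#|X| <= k)%N].
have hMk : is_matroid indk := @trunc_matroid E indep k hM.
have hk : forall I, indk I -> (#|I| <= k)%N by move=> I /andP[].
have iAk : indk A by rewrite /indk /= iA cA leqnn.
have iBk : indk B by rewrite /indk /= iB cB leqnn.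
pose K := {ffun 'I_m -> 'I_(2*Delta).+1}.
pose col (e : E) : K := [ffun i => inord (absz (W e 0 i + Delta%:Z))].
have colP : forall a b, col a = col b -> W a = W b.
  move=> a b /ffunP h; apply/rowP => i; have := h i; rewrite !ffunE => /(congr1 val).
  have := hW a i; have := hW b i; rewrite !ler_norml => hb ha.
  rewrite /= !inordK; lia.
pose val (e : E) := dotv d (W e).
have nd0 := norm1_ge0 d.
pose n0 := (absz (norm1 d) * Delta)%N.
have en0 : n0%:Z = norm1 d * Delta%:Z by rewrite /n0 PoszM gez0_abs.
have hval : forall e, `|val e| <= n0%:Z by move=> e; rewrite en0; apply: dot_boundc.
pose V := (2 * n0).+1.
pose t (j : 'I_V) := j%:Z - n0%:Z.
pose Ck j (c : K) := [set a in A | (col a == c) && (t j <= val a)].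
pose Dk j (c : K) := [set b in B | (col b == c) && (val b <= t j)].
pose XU j := [set a in A | t j <= val a].
pose XB j := [set b in B | val b <= t j].
have eU : forall j, \bigcup_c Ck j c = XU j.
  move=> j; apply/setP => a; rewrite inE; apply/bigcupP/idP => [[c _]|].
    by rewrite !inE => /andP[-> /andP[_ ->]].
  by move=> /andP[aA h]; exists (col a) => //; rewrite !inE aA eqxx h.
have eD : forall j, \bigcup_c Dk j c = XB j.
  move=> j; apply/setP => a; rewrite inE; apply/bigcupP/idP => [[c _]|].
    by rewrite !inE => /andP[-> /andP[_ ->]].
  by move=> /andP[aA h]; exists (col a) => //; rewrite !inE aA eqxx h.
have DB : forall j c, Dk j c \subset B by move=> j c; apply/subsetP => b; rewrite inE => /andP[].
have hrho : forall j, (#|XB j| <= \sum_c \sum_c' rho indk A (Ck j c) (Dk j c') + #|A :\: XU j|)%N.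
  move=> j.
  have iX : indk (XB j) by apply: (indep_sub hMk iBk); apply/subsetP => b; rewrite inE => /andP[].
  apply: leq_trans (rho_lb hMk iAk (XU j) iX) _; rewrite leq_add2r.
  rewrite -{1}eU; apply: leq_trans (rho_bigC hMk hk iAk cA _ _) _.
  by apply: leq_sum => c _; rewrite -eD; apply: (rho_bigX hMk iAk cA).
have eAU : forall j, A :\: XU j = [set a in A | val a < t j].
  by move=> j; apply/setP => a; rewrite !inE; case: (a \in A); rewrite /= ?ltNge ?andbT.
have hsum : \sum_(j < V) (Posz #|XB j| - Posz #|A :\: XU j|)
    = k%:Z + \sum_(a in A) val a - \sum_(b in B) val b.
  rewrite sumrB.
  have e1 : \sum_(j < V) Posz #|XB j| = \sum_(b in B) (n0%:Z + 1 - val b).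
    under eq_bigr do rewrite /XB card_cond PoszS.
    rewrite exchange_big /=; apply: eq_bigr => b _; exact: cnt_le.
  have e2 : \sum_(j < V) Posz #|A :\: XU j| = \sum_(a in A) (n0%:Z - val a).
    under eq_bigr do rewrite eAU card_cond PoszS.
    rewrite exchange_big /=; apply: eq_bigr => b _; exact: cnt_lt.
  rewrite e1 e2 !sumrB !sumr_const cA cB mulrnDl natz.
  move: (n0%:Z *+ k) (\sum_(i in A) val i) (\sum_(i in B) val i) => x y z; ring.
have V0 : (0 < #|'I_V|)%N by rewrite card_ord.
have [j hj] := pigeon_int (fun j : 'I_V => Posz #|XB j| - Posz #|A :\: XU j|) V0.
rewrite card_ord in hj.
have K0 : (0 < #|K|)%N by apply/card_gt0P; exists [ffun => ord0].
have [c hc] := pigeon_nat (fun c => \sum_c' rho indk A (Ck j c) (Dk j c')) K0.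
have [c' hc'] := pigeon_nat (fun c' => rho indk A (Ck j c) (Dk j c')) K0.
have [A' [B' [[sA sC sD cAB] [hr iAB]]]] :=
  rho_real hMk hk iAk cA (Ck j c) (disjointWr (DB j c') dAB).
exists A', B'; split; first split.
- done.
- exact: subset_trans sD (DB j c').
- move=> a b aA bA; apply: colP; move: (subsetP sC a aA) (subsetP sC b bA).
  by rewrite !inE => /andP[_ /andP[/eqP -> _]] /andP[_ /andP[/eqP -> _]].
- move=> a b aA bA; apply: colP; move: (subsetP sD a aA) (subsetP sD b bA).
  by rewrite !inE => /andP[_ /andP[/eqP -> _]] /andP[_ /andP[/eqP -> _]].
split.
- done.
- by move: iAB => /andP[].
- set N := #|K|; set r := #|A'|.
  have hX : (#|XB j| <= N * (N * r) + #|A :\: XU j|)%N.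
    apply: leq_trans (hrho j) _; rewrite leq_add2r; apply: leq_trans hc _.
    rewrite leq_mul2l; apply/orP; right; apply: leq_trans hc' _.
    by rewrite leq_mul2l /r cAB hr orbT.
  have hS : k%:Z + dotv d (wsum W A) - dotv d (wsum W B) <= V%:Z * (N * (N * r))%N%:Z.
    rewrite -!dotv_sum -hsum; apply: le_trans hj _; apply: ler_wpM2l => //.
    by rewrite lerBlDr -PoszD lez_nat addnC; rewrite addnC.
  have hdb := dot_bound d (wsum W A - wsum W B); rewrite dotvB ler_norml in hdb.
  move: hdb => /andP[hdb _].
  have hN : N = ((2 * Delta).+1 ^ m)%N by rewrite /N card_ffun !card_ord.
  have eV : V%:Z = 2 * norm1 d * Delta%:Z + 1 by rewrite /V -mulrA -en0 PoszS2.
  have hQ : ((2 * norm1 d * Delta%:Z + 1) ^+ 2 * (2 * Delta%:Z + 1) ^+ (2 * m))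
      = (V * N)%N%:Z ^+ 2.
    rewrite -eV hN mulnC exprM PoszM exprMn; congr (_ * _); congr (_ ^+ 2).
    by rewrite PoszX PoszS2.
  have hVN : (V * (N * (N * r)) <= r * (V * N) ^ 2)%N.
    exact: nat_aux.
  have hZ : k%:Z - norm1 d * norm1 (wsum W A - wsum W B) <= r%:Z * (V * N)%N%:Z ^+ 2.
    apply: le_trans (_ : V%:Z * (N * (N * r))%N%:Z <= _).
      exact: lin_aux hS hdb.
    rewrite -PoszX -PoszM lez_nat; exact: hVN.
  rewrite hQ ler_pdivrMr; last by rewrite ltr0z exprn_gt0 // ltz_nat muln_gt0 K0.
  have hR := hZ; rewrite -(ler_int R) in hR.
  apply: le_trans (_ : _ <= (k%:Z - norm1 d * norm1 (wsum W A - wsum W B))%:~R) _.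
    rewrite rmorphB rmorphM /=; apply: lerD; first exact: lexx.
    by rewrite lerN2; apply: ler_wpM2l; first by rewrite ler0z.
  by apply: le_trans hR _; rewrite rmorphM /=; exact: lexx.
- move=> a b aA bB; move: (subsetP sC a aA) (subsetP sD b bB).
  rewrite !inE => /andP[_ /andP[_ h1]] /andP[_ /andP[_ h2]]; exact: le_trans h2 h1.
Qed.
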